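(* Consider the model, design and estimator described in the context. For any $r,\ell\ge0$, $i,i'\in U$ and $t,t'\in[T]$, \[{\rm Cov}\big(\widehat\Delta^r_{it},\widehat\Delta^r_{i't'}\big)\le\frac{4(1+\sigma^2)}{p^r_{it}\,p^r_{i't'}}.\]
   Context: Model. There are $N$ individuals forming the vertex set $U$ ($|U|=N$) of an undirected interference graph $G=(U,E)$, and $T$ rounds $[T]=\{1,\dots,T\}$. For $i\in U$ let $\mathcal N(i)=\{i\}\cup\{j\in U:(i,j)\in E\}$. A treatment matrix $W\in\{0,1\}^{N\times T}$ is drawn at the beginning, independently of all other randomness. Each individual $i$ has a state $S_{it}$ in a state space $\mathcal S$; conditionally on $W$ the states evolve as Markov chains with $S_{i,t+1}\sim P_{it}^{W_{\mathcal N(i),t}}(\cdot\mid S_{it})$. Observed outcomes are $Y_{it}=\mu_{it}(S_{it},W_{\mathcal N(i),t})+\epsilon_{it}$, where $\mu_{it}:\mathcal S\times\{0,1\}^{\mathcal N(i)}\to[0,1]$. Uncorrelated noise: there is a constant $\sigma$ such that, with $S=(S_{it})$, $\mathbb E[\epsilon_{it}\mid S,W]=0$ and $\mathbb E[\epsilon_{it}\epsilon_{i't'}\mid S,W]\le\sigma^2\mathbbm 1(i=i',t=t')$. A fixed parameter $\delta\in[0,1)$ is used in the exposure mapping. Design (clustered switchback): $\Pi$ is a partition of $U$ into clusters; $[T]$ is partitioned into consecutive time blocks of length $\ell$ (the last possibly shorter); for each cluster $C\in\Pi$ and block $B$, independently $A_{CB}\sim{\rm Ber}(1/2)$, and $W_{it}=A_{CB}$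 for $(i,t)\in C\times B$. Estimator: $X^r_{ita}(W)=\prod_{t'=t-r}^{t}\mathbbm 1\Big(\frac{\sum_{i'\in\mathcal N(i)}\mathbbm 1(W_{i't'}=a)}{|\mathcal N(i)|}\ge1-\delta\Big)$, $p^r_{ita}=\mathbb P[X^r_{ita}=1]$; since treatment and control are equally likely, $p^r_{it0}=p^r_{it1}$, and this common value is denoted $p^r_{it}$. $\widehat\Delta^r_{it}=\frac{X^r_{it1}}{p^r_{it1}}Y_{it}-\frac{X^r_{it0}}{p^r_{it0}}Y_{it}$. *)

(* Defs.v *)
From HB Require Import structures.
From mathcomp Require Import all_boot all_order all_algebra.
From mathcomp Require Import all_classical all_reals all_analysis.
Set Implicit Arguments. Unset Strict Implicit. Unset Printing Implicit Defensive.
Import Order.TTheory GRing.Theory Num.Theory.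
Local Open Scope classical_set_scope.
Local Open Scope ring_scope.

(* Rounds are indexed 0-based: t : nat with t < T stands for round t+1 of [T]. *)

Definition nbhd {U : finType} (E : rel U) (i : U) : {set U} :=
  [set j | (j == i) || E i j].

(* restriction of a treatment vector to N(i) (values outside N(i) erased),
   so a function of [restr E i w] is a function of w_{N(i)} *)
Definition restr {U : finType} (E : rel U) (i : U) (w : U -> bool) : U -> bool :=
  fun j => if j \in nbhd E i then w j else false.

Definition frac {R : realType} {U : finType} (E : rel U) (i : U)
  (w : U -> nat -> bool) (t' : nat) (a : bool) : R :=
  #|[set j in nbhd E i | w j t' == a]|%:R / #|nbhd E i|%:R.

(* exposure indicator X^r_{ita}(W): product over t' = t-r .. t
   (rounds before the first one are dropped: nat subtraction truncates at 0) *)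
Definition expo {R : realType} {U : finType} (E : rel U) (delta : R) (r : nat)
  (i : U) (t : nat) (a : bool) (w : U -> nat -> bool) : R :=
  \prod_(t - r <= t' < t.+1) (if 1 - delta <= frac E i w t' a then 1 else 0).

Definition pexpo {R : realType} {d : measure_display} {Omega : measurableType d}
  (P : probability Omega R) {U : finType} (E : rel U) (delta : R) (r : nat)
  (W : Omega -> U -> nat -> bool) (i : U) (t : nat) (a : bool) : R :=
  fine (P [set om | expo E delta r i t a (W om) = 1]).

Definition outcome {R : realType} {d : measure_display} {Omega : measurableType d}
  {dS : measure_display} {St : measurableType dS} {U : finType} (E : rel U)
  (mu : U -> nat -> St -> (U -> bool) -> R)
  (W : Omega -> U -> nat -> bool) (S : Omega -> U -> nat -> St)
  (eps : Omega -> U -> nat -> R) (i : U) (t : nat) : Omega -> R :=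
  fun om => mu i t (S om i t) (restr E i (fun j => W om j t)) + eps om i t.

Definition Dhat {R : realType} {d : measure_display} {Omega : measurableType d}
  (P : probability Omega R)
  {dS : measure_display} {St : measurableType dS} {U : finType} (E : rel U)
  (delta : R) (r : nat) (mu : U -> nat -> St -> (U -> bool) -> R)
  (W : Omega -> U -> nat -> bool) (S : Omega -> U -> nat -> St)
  (eps : Omega -> U -> nat -> R) (i : U) (t : nat) : Omega -> R :=
  fun om =>
    expo E delta r i t true (W om) / pexpo P E delta r W i t true
      * outcome E mu W S eps i t om
    - expo E delta r i t false (W om) / pexpo P E delta r W i t false
      * outcome E mu W S eps i t om.

Definition sigmaW {d : measure_display} {Omega : measurableType d} {U : finType}
  (T : nat) (W : Omega -> U -> nat -> bool) : set (set Omega) :=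
  <<s [set F | exists j t', (t' < T)%N /\ F = [set om | W om j t']] >>.

Definition sigmaWS {d : measure_display} {Omega : measurableType d}
  {dS : measure_display} {St : measurableType dS} {U : finType}
  (T : nat) (W : Omega -> U -> nat -> bool) (S : Omega -> U -> nat -> St)
  (u : nat) : set (set Omega) :=
  <<s [set F | (exists j t', (t' < T)%N /\ F = [set om | W om j t'])
            \/ (exists j t' (A : set St), (t' <= u)%N /\ measurable A /\
                  F = [set om | S om j t' \in A])] >>.

Definition sigmaS0 {d : measure_display} {Omega : measurableType d}
  {dS : measure_display} {St : measurableType dS} {U : finType}
  (S : Omega -> U -> nat -> St) : set (set Omega) :=
  <<s [set F | exists j (A : set St), measurable A /\
                  F = [set om | S om j 0%N \in A]] >>.

Definition nblocks (l T : nat) : nat := size (undup [seq (t %/ l)%N | t <- iota 0 T]).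

(* Main.v *)
Require Import Defs.
From HB Require Import structures.
From mathcomp Require Import all_boot all_order all_algebra.
From mathcomp Require Import all_classical all_reals all_analysis.
Import Order.TTheory GRing.Theory Num.Theory.
Local Open Scope classical_set_scope.
Local Open Scope ring_scope.

From mathcomp Require Import ring lra.

Lemma frac_ext (R : realType) (U : finType) (E : rel U) i (w w' : U -> nat -> bool) t' a :
  (forall j, w j t' = w' j t') -> Defs.frac (R:=R) E i w t' a = Defs.frac E i w' t' a.
Proof.
move=> H; rewrite /Defs.frac; congr (_%:R / _); apply: eq_card => j.
by rewrite !inE H.
Qed.

Lemma expo_ext (R : realType) (U : finType) (E : rel U) (delta : R) r i t a
  (w w' : U -> nat -> bool) :
  (forall j t', (t' <= t)%N -> w j t' = w' j t') ->
  expo E delta r i t a w = expo E delta r i t a w'.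
Proof.
move=> H; rewrite /expo; apply: eq_big_nat => t' /andP[_ lt].
by rewrite (@frac_ext _ _ _ _ w w') // => j; apply: H.
Qed.

Lemma expo_neg (R : realType) (U : finType) (E : rel U) (delta : R) r i t a
  (w : U -> nat -> bool) :
  expo E delta r i t a (fun j t' => ~~ w j t') = expo E delta r i t (~~ a) w.
Proof.
rewrite /expo; apply: eq_bigr => t' _; rewrite /Defs.frac.
suff -> : #|[set j in nbhd E i | ~~ w j t' == a]| = #|[set j in nbhd E i | w j t' == ~~ a]| by [].
by apply: eq_card => j; rewrite !inE; case: (w j t'); case: a.
Qed.

Lemma expo01 (R : realType) (U : finType) (E : rel U) (delta : R) r i t a
  (w : U -> nat -> bool) :
  0 <= expo E delta r i t a w <= 1.
Proof.
rewrite /expo; apply: (big_ind (fun x : R => 0 <= x <= 1)).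
- by rewrite ler01 lexx.
- move=> x y /andP[x0 x1] /andP[y0 y1]; apply/andP; split.
    exact: mulr_ge0.
  exact: mulr_ile1.
- by move=> t' _; case: ifP => _; rewrite ?lexx ?ler01.
Qed.

Lemma pw_meas (R : realType) (d : measure_display) (Omega : measurableType d)
  (X : finType) (pi : Omega -> X) (f : Omega -> R) (fs : X -> Omega -> R) :
  (forall x, measurable [set om | pi om = x]) ->
  (forall x, measurable_fun setT (fs x)) ->
  (forall om, f om = fs (pi om) om) ->
  measurable_fun setT f.
Proof.
move=> Hpi Hfs Hf _ Y mY.
have -> : setT `&` f @^-1` Y =
    \bigcup_(x in [set: X]) ([set om | pi om = x] `&` (setT `&` fs x @^-1` Y)).
  apply/seteqP; split => om /=.
    move=> [_ Yf]; exists (pi om) => //; split => //; split => //.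
    by rewrite /preimage /= -Hf.
  by move=> [x _ [/= <- [_ H]]]; split => //; rewrite /preimage /= Hf.
apply: fin_bigcup_measurable; first exact: finite_finset.
move=> x _; apply: measurableI; first exact: Hpi.
exact: (Hfs x measurableT Y mY).
Qed.

Lemma L2_of (R : realType) (d : measure_display) (Omega : measurableType d)
  (P : probability Omega R) (f : Omega -> R) :
  measurable_fun setT f -> (\int[P]_x (f x ^+ 2)%:E < +oo)%E ->
  f \in Lfun P 2%:E.
Proof.
move=> mf fin; rewrite inE; apply/andP; split; first by rewrite inE.
rewrite inE /= /finite_norm unlock /Lnorm.
apply: poweR_lty.
suff -> : (\int[P]_x `|(EFin \o f) x| `^ 2 = \int[P]_x (f x ^+ 2)%:E)%E by [].
by apply: eq_integral => x _ /=; rewrite (powR_mulrn 2 (normr_ge0 _)) real_normK ?num_real.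
Qed.
Theorem mainTheorem10
  (R : realType)
  (* probability space *)
  (d : measure_display) (Omega : measurableType d) (P : probability Omega R)
  (* individuals, interference graph, rounds *)
  (U : finType) (E : rel U) (T : nat)
  (* state space *)
  (dS : measure_display) (St : measurableType dS)
  (* transition kernels P_{it}^{w}, mean outcome functions mu_{it} *)
  (K : U -> nat -> (U -> bool) -> R.-pker St ~> St)
  (mu : U -> nat -> St -> (U -> bool) -> R)
  (* design: clusters Pi, block length l, cluster/block coins A *)
  (Pi : {set {set U}}) (l : nat)
  (A : Omega -> {set U} -> nat -> bool)
  (* treatments, states, noise *)
  (W : Omega -> U -> nat -> bool) (S : Omega -> U -> nat -> St)
  (eps : Omega -> U -> nat -> R)
  (sigma delta : R) (r : nat)
  (* undirected graph *)
  (HE : symmetric E)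
  (* mean outcomes in [0,1] and measurable in the state *)
  (Hmu01 : forall i t s w, 0 <= mu i t s w <= 1)
  (Hmu_meas : forall i t w, measurable_fun setT (fun s => mu i t s w))
  (* clustered switchback design *)
  (HPi : finset.partition Pi [set: U])
  (HA_meas : forall C b, measurable [set om | A om C b])
  (HA_law : forall a : {set U} -> nat -> bool,
     P [set om | forall C t, C \in Pi -> (t < T)%N ->
                   A om C (t %/ l)%N = a C (t %/ l)%N]
     = ((1 / 2) ^+ (#|Pi| * nblocks l T))%:E)
  (HW : forall om i t, W om i t = A om (finset.pblock Pi i) (t %/ l)%N)
  (* states: measurable; W independent of the initial states;
     conditionally on W, Markov transitions S_{i,t+1} ~ P_{it}^{W_{N(i),t}}(. | S_{it}) *)
  (HS_meas : forall i t, measurable_fun setT (fun om => S om i t))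
  (HW_indep : forall F G, sigmaW T W F -> sigmaS0 S G ->
     P (F `&` G) = (P F * P G)%E)
  (HMarkov : forall i t (B : set St) (F : set Omega), (t < T)%N ->
     measurable B -> sigmaWS T W S t F ->
     P ([set om | S om i t.+1 \in B] `&` F)
     = (\int[P]_(om in F) K i t (restr E i (fun j => W om j t)) (S om i t) B)%E)
  (* uncorrelated noise: E[eps_{it} | S, W] = 0 and
     E[eps_{it} eps_{i't'} | S, W] <= sigma^2 1(i = i', t = t') *)
  (Heps_meas : forall i t, measurable_fun setT (fun om => eps om i t))
  (Heps_mean : forall i t F, (t < T)%N -> sigmaWS T W S T F ->
     (\int[P]_(om in F) (eps om i t)%:E = 0)%E)
  (Heps_cov : forall i t i' t' F, (t < T)%N -> (t' < T)%N -> sigmaWS T W S T F ->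
     (\int[P]_(om in F) (eps om i t * eps om i' t')%:E
      <= (sigma ^+ 2 * ((i == i') && (t == t'))%:R)%:E * P F)%E)
  (* exposure threshold *)
  (Hdelta : 0 <= delta < 1) :
  forall i i' t t', (t < T)%N -> (t' < T)%N ->
    (covariance P (Dhat P E delta r mu W S eps i t) (Dhat P E delta r mu W S eps i' t')
     <= (4 * (1 + sigma ^+ 2)
          / (pexpo P E delta r W i t true * pexpo P E delta r W i' t' true))%:E)%E.
Proof.
move=> i i' t t' tT t'T.
have T0 : (0 < T)%N by apply: leq_ltn_trans tT.
pose o0 : 'I_T := Ordinal T0.
pose ordT (n : nat) : 'I_T := insubd o0 n.
pose G := {ffun {set U} * 'I_T -> bool}.
pose psi (a : {set U} -> nat -> bool) : G :=
  [ffun x : {set U} * 'I_T => if x.1 \in Pi then a x.1 (x.2 %/ l)%N else false].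
pose pi om := psi (A om).
pose Fg (g : G) := [set om | pi om = g].
pose Wobs (g : G) := fun j t' => g (finset.pblock Pi j, ordT t').
have pbP j : finset.pblock Pi j \in Pi.
  apply: pblock_mem; move: HPi => /and3P[/eqP H _ _]. by rewrite H finset.in_setT.
have WobsE om j s : (s < T)%N -> W om j s = Wobs (pi om) j s.
  move=> sT; rewrite /Wobs /pi /psi ffunE /= pbP /ordT val_insubd sT.
  by rewrite HW.
have Fg_meas g : measurable (Fg g).
  have -> : Fg g = \bigcap_(x in [set: {set U} * 'I_T])
      [set om | (if x.1 \in Pi then A om x.1 (x.2 %/ l)%N else false) = g x].
    apply/seteqP; split => om /=.
      by move=> <- x _ /=; rewrite /pi /psi ffunE.
    by move=> H; apply/ffunP => x; rewrite /pi /psi ffunE; apply: H.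
  apply: fin_bigcap_measurable; first exact: finite_finset.
  move=> [C b] _ /=; case: (C \in Pi); last first.
    by case: (g (C, b)); [rewrite [X in measurable X](_ : _ = set0) |
       rewrite [X in measurable X](_ : _ = setT)] => //;
       apply/seteqP; split => om //=.
  case: (g (C, b)).
    by rewrite [X in measurable X](_ : _ = [set om | A om C (b %/ l)%N]) //.
  rewrite [X in measurable X](_ : _ = ~` [set om | A om C (b %/ l)%N]).
    exact/measurableC.
  apply/seteqP; split => om /=; first by move=> ->.
  by move/negP/negbTE.
have Fpsi a : Fg (psi a) = [set om | forall C s, C \in Pi -> (s < T)%N ->
                 A om C (s %/ l)%N = a C (s %/ l)%N].
  apply/seteqP; split => om /=.
    move=> H C s CP sT; move/ffunP: H => /(_ (C, Ordinal sT)).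
    by rewrite /pi /psi !ffunE /= CP.
  move=> H; apply/ffunP => x; rewrite /pi /psi !ffunE.
  by case: ifP => // xP; apply: H.
pose neg (g : G) : G := [ffun x => if x.1 \in Pi then ~~ g x else g x].
have negK : involutive neg.
  move=> g; apply/ffunP => x; rewrite !ffunE; by case: (x.1 \in Pi) => //=; rewrite negbK.
have negpsi a : neg (psi a) = psi (fun C b => ~~ a C b).
  by apply/ffunP => x; rewrite !ffunE; case: (x.1 \in Pi).
have PFneg g : P (Fg (neg g)) = P (Fg g).
  have [[a ->]|na] := pselect (exists a, g = psi a).
    by rewrite negpsi !Fpsi (HA_law (fun C b => ~~ a C b)) HA_law.
  have F0 g' : ~ (exists a, g' = psi a) -> Fg g' = set0.
    move=> nx; apply/seteqP; split => om //= H; apply: nx; exists (A om).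
    by rewrite -H.
  rewrite (F0 g na) (F0 (neg g)) //; move=> [a Ha]; apply: na; exists (fun C b => ~~ a C b).
  by rewrite -negpsi -Ha negK.
have expoE i0 s a om : (s < T)%N ->
    expo E delta r i0 s a (W om) = expo E delta r i0 s a (Wobs (pi om)).
  move=> sT; apply: expo_ext => j s' s's; apply: WobsE.
  exact: leq_ltn_trans s's sT.
have expo_negW i0 s a g :
    expo E delta r i0 s a (Wobs (neg g)) = expo E delta r i0 s (~~ a) (Wobs g).
  rewrite -expo_neg; apply: expo_ext => j s' _.
  by rewrite /Wobs ffunE /= pbP.
have psym i0 s : (s < T)%N ->
    pexpo P E delta r W i0 s false = pexpo P E delta r W i0 s true.
  move=> sT.
  pose Ea a := [set om | expo E delta r i0 s a (W om) = 1].
  have Hint a g : Fg g `&` Ea a =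
      if expo E delta r i0 s a (Wobs g) == 1 then Fg g else set0.
    apply/seteqP; split => om /=.
      move=> [Hg]; rewrite /Ea /= expoE // /Fg /= Hg => ->.
      by rewrite eqxx.
    case: ifP => [/eqP H1 Hg|_ //]; split => //.
    by move: Hg; rewrite /Ea /Fg /= expoE // => ->.
  have decomp a : Ea a = \bigcup_(g in [set: G]) (Fg g `&` Ea a).
    apply/seteqP; split => om /=.
      by move=> H; exists (pi om) => //.
    by move=> [g _ []].
  have mH a g : measurable (Fg g `&` Ea a).
    by rewrite Hint; case: ifP.
  have tH a : trivIset [set: G] (fun g => Fg g `&` Ea a).
    move=> g1 g2 _ _ [om [[/= H1 _] [/= H2 _]]].
    by rewrite -H1 -H2.
  rewrite /pexpo; congr fine.
  rewrite -/(Ea false) -/(Ea true) (decomp false) (decomp true).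
  rewrite measure_fin_bigcup //; last exact: finite_finset.
  rewrite measure_fin_bigcup //; last exact: finite_finset.
  rewrite (reindex_fsbigT neg); last by exists neg.
  apply: eq_fsbigr => g _.
  rewrite !Hint expo_negW /=.
  case: ifP => _; first exact: PFneg.
  by rewrite measure0.
pose pp i0 s := pexpo P E delta r W i0 s true.
have pp_ge0 i0 s : 0 <= pp i0 s by apply: fine_ge0; exact: measure_ge0.
have Dmeas i0 s : (s < T)%N ->
    measurable_fun setT (Dhat P E delta r mu W S eps i0 s).
  move=> sT.
  apply: (@pw_meas _ _ _ G pi _ (fun g om =>
     expo E delta r i0 s true (Wobs g) / pexpo P E delta r W i0 s true *
       (mu i0 s (S om i0 s) (restr E i0 (fun j => Wobs g j s)) + eps om i0 s)
   - expo E delta r i0 s false (Wobs g) / pexpo P E delta r W i0 s false *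
       (mu i0 s (S om i0 s) (restr E i0 (fun j => Wobs g j s)) + eps om i0 s))).
  - exact: Fg_meas.
  - move=> g; apply: measurable_realfun.measurable_funB; apply: measurable_realfun.measurable_funM;
      (try exact: measurable_cst); apply: measurable_realfun.measurable_funD => //;
      exact: (measurableT_comp (Hmu_meas i0 s _) (HS_meas i0 s)).
  - move=> om; rewrite /Dhat /outcome !expoE //.
    have -> : restr E i0 (fun j => W om j s) =
              restr E i0 (fun j => Wobs (pi om) j s).
      by congr restr; apply: funext => j; exact: WobsE.
    by [].
have Dform i0 s om : (s < T)%N -> Dhat P E delta r mu W S eps i0 s om =
    (expo E delta r i0 s true (W om) - expo E delta r i0 s false (W om))
      / pp i0 s * outcome E mu W S eps i0 s om.
  by move=> sT; rewrite /Dhat psym // -!mulrBl.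
have D2bound i0 s om : (s < T)%N ->
    Dhat P E delta r mu W S eps i0 s om ^+ 2 <=
    (pp i0 s)^-1 ^+ 2 * (2 + 2 * eps om i0 s ^+ 2).
  move=> sT; rewrite Dform // /outcome.
  set x1 := expo _ _ _ _ _ true _.
  set x0 := expo _ _ _ _ _ false _.
  set m := mu _ _ _ _.
  set e := eps om i0 s.
  have /andP[h10 h11] := @expo01 R U E delta r i0 s true (W om).
  have /andP[h00 h01] := @expo01 R U E delta r i0 s false (W om).
  have /andP[hm0 hm1] := Hmu01 i0 s (S om i0 s) (restr E i0 (fun j => W om j s)).
  rewrite -/x1 -/x0 -/m in h10 h11 h00 h01 hm0 hm1.
  have ha : (x1 - x0) ^+ 2 <= 1.
    have hh : 0 <= (1 - x1 + x0) * (1 + x1 - x0) by apply: mulr_ge0; lra.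
    rewrite expr2.
    nra.
  have hc : (m + e) ^+ 2 <= 2 + 2 * e ^+ 2.
    have hh1 : 0 <= (e - m) * (e - m) by rewrite -expr2; apply: sqr_ge0.
    have hh2 : m * m <= 1 by apply: mulr_ile1.
    rewrite !expr2; nra.
  rewrite !exprMn -mulrA.
  apply: le_trans (ler_piMl _ ha) _.
    by apply: mulr_ge0; apply: sqr_ge0.
  by apply: ler_wpM2l => //; apply: sqr_ge0.
have HsT : sigmaWS T W S T setT.
  move=> M /= [[M0 MC _] _]; have := MC set0 M0.
  by rewrite setD0.
have Eeps2 i0 s : (s < T)%N ->
    (\int[P]_x (eps x i0 s ^+ 2)%:E <= (sigma ^+ 2)%:E)%E.
  move=> sT; have := Heps_cov i0 s i0 s setT sT sT HsT.
  rewrite !eqxx mulr1 probability_setT mule1.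
  by move=> H; under eq_integral => x _ do rewrite expr2.
have meps2 i0 s : measurable_fun setT (fun x => eps x i0 s ^+ 2).
  exact: measurable_realfun.measurable_funX.
have ED2 i0 s : (s < T)%N ->
    (\int[P]_x (Dhat P E delta r mu W S eps i0 s x ^+ 2)%:E
      <= ((pp i0 s)^-1 ^+ 2 * (2 + 2 * sigma ^+ 2))%:E)%E.
  move=> sT.
  set k := (pp i0 s)^-1 ^+ 2.
  have k0 : 0 <= k by apply: sqr_ge0.
  apply: le_trans (ge0_le_integral (f2 := fun x => (k * (2 + 2 * eps x i0 s ^+ 2))%:E)
     P measurableT _ _ _ _) _.
  - by move=> x _; rewrite lee_fin; apply: sqr_ge0.
  - apply/measurable_realfun.measurable_EFinP.
    exact/measurable_realfun.measurable_funX/Dmeas.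
  - apply/measurable_realfun.measurable_EFinP.
    apply: measurable_realfun.measurable_funM; first exact: measurable_cst.
    apply: measurable_realfun.measurable_funD; first exact: measurable_cst.
    apply: measurable_realfun.measurable_funM; first exact: measurable_cst.
    exact: meps2.
  - by move=> x _; rewrite lee_fin; apply: D2bound.
  have -> : (\int[P]_x (k * (2 + 2 * eps x i0 s ^+ 2))%:E =
     \int[P]_x ((k * 2)%:E + (k * 2)%:E * (eps x i0 s ^+ 2)%:E))%E.
    by apply: eq_integral => x _; rewrite mulrDr mulrA EFinD EFinM.
  rewrite ge0_integralD.
  - rewrite integral_cst //.
    rewrite [X in (_ * X + _)%E](_ : _ = 1%E); last exact: probability_setT.
    rewrite mule1.
    rewrite ge0_integralZl_EFin //.
    + have -> : k * (2 + 2 * sigma ^+ 2) = k * 2 + k * 2 * sigma ^+ 2 by rewrite mulrDr mulrA.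
      rewrite EFinD; apply: leeD => //.
      rewrite (EFinM (k * 2) (sigma ^+ 2)); apply: lee_pmul => //; first by rewrite lee_fin mulr_ge0.
        by apply: integral_ge0 => x _; rewrite lee_fin sqr_ge0.
      exact: Eeps2.
    + by move=> x _; rewrite lee_fin sqr_ge0.
    + exact/measurable_realfun.measurable_EFinP.
    + by rewrite mulr_ge0.
  - exact: measurableT.
  - by move=> x _; rewrite lee_fin mulr_ge0.
  - exact: measurable_cst.
  - move=> x _; apply: mule_ge0; rewrite lee_fin; [exact: mulr_ge0 | exact: sqr_ge0].
  - rewrite (_ : (fun x => _) = EFin \o (fun x => k * 2 * eps x i0 s ^+ 2)); last first.
      by apply: funext => x; rewrite /= EFinM.
    apply/measurable_realfun.measurable_EFinP.
    apply: measurable_realfun.measurable_funM; first exact: measurable_cst.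
    exact: meps2.
have L2D i0 s : (s < T)%N -> Dhat P E delta r mu W S eps i0 s \in Lfun P 2%:E.
  move=> sT; apply: L2_of; first exact: Dmeas.
  exact: le_lt_trans (ED2 _ _ sT) (ltry _).
have VD i0 s : (s < T)%N -> ('V_P[Dhat P E delta r mu W S eps i0 s]
      <= ((pp i0 s)^-1 ^+ 2 * (2 + 2 * sigma ^+ 2))%:E)%E.
  move=> sT; rewrite varianceE; last exact: L2D.
  apply: le_trans (ED2 _ _ sT).
  have fin1 : expectation P (Dhat P E delta r mu W S eps i0 s) \is a fin_num.
    apply: expectation_fin_num; apply: Lfun_subset12 (L2D _ _ sT).
    exact: fin_num_measure.
  apply: le_trans (leeB (lexx _) (sqre_ge0 _)) _.
  rewrite sube0.
  by rewrite expectation.unlock exprfctE.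
have sV i0 s : (s < T)%N -> (sqrte ('V_P[Dhat P E delta r mu W S eps i0 s])
    <= (Num.sqrt (2 + 2 * sigma ^+ 2) * (pp i0 s)^-1)%:E)%E.
  move=> sT.
  have s0 : 0 <= 2 + 2 * sigma ^+ 2.
    by apply: addr_ge0 => //; apply: mulr_ge0 => //; apply: sqr_ge0.
  have a0 : 0 <= Num.sqrt (2 + 2 * sigma ^+ 2) * (pp i0 s)^-1.
    by apply: mulr_ge0; [apply: sqrtr_ge0 | rewrite invr_ge0].
  rewrite -(gee0_abs (x := (_ * _)%:E)); last by rewrite lee_fin.
  rewrite -sqrte_sqr lee_sqrt; last exact: sqre_ge0.
  rewrite -EFin_expe exprMn sqr_sqrtr // mulrC.
  exact: VD.
apply: le_trans (covariance_le (L2D _ _ tT) (L2D _ _ t'T)) _.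
apply: le_trans (lee_pmul (sqrte_ge0 _) (sqrte_ge0 _) (sV _ _ tT) (sV _ _ t'T)) _.
rewrite -EFinM lee_fin.
rewrite mulrACA -expr2 sqr_sqrtr; last first.
  by apply: addr_ge0 => //; apply: mulr_ge0 => //; apply: sqr_ge0.
rewrite invfM -/(pp i t) -/(pp i' t').
apply: ler_wpM2r.
  by apply: mulr_ge0; rewrite invr_ge0.
have := sqr_ge0 sigma; lra.
Qed.
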